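(* Let $(E,\mathcal L)$ be a regular local representation over an infinite set $B$, let $B'\subseteq B$ be infinite, and let $E'=\{e\in E:\{\psi\in B^E:\psi_e\in B'\}\in\mathcal L\}$ with its sub-local-representation structure over $B'$. Then $E'$ is a regular local representation over $B'$.
   Context: A local representation over a set $B$ is a pair $(E,\mathcal L)$ with $\mathcal L$ an ultrafilter on the cylinder Boolean algebra of $B^E$ (sets $\{\psi\in B^E:(\psi_{e_1},\dots,\psi_{e_n})\in R\}$, $e_i\in E$, $R\subseteq B^n$). Separated: $\{\psi:\psi_{e_1}=\psi_{e_2}\}\in\mathcal L$ only if $e_1=e_2$. The sub-local-representation structure on $E'$ over $B'$ is the ultrafilter $\mathcal L'$ on the cylinders of $B'^{E'}$ with $\{\psi':(\psi'_{e_1},\dots,\psi'_{e_n})\in R\}\in\mathcal L'$ iff $\{\psi\in B^E:(\psi_{e_1},\dots,\psi_{e_n})\in R\}\in\mathcal L$ ($e_i\in E'$, $R\subseteq B'^n$). For $\eta:I\to E$, the pullback of $\mathcal L$ by $\eta$ is the ultrafilter of cylinders $C\subseteq B^I$ with $\{\psi:(\psi_{\eta(i)})_{i\in I}\in C\}\in\mathcal L$; projection to $B^I$ of an ultrafilter on cylinders of $B^{I\cup\{i_0\}}$ consists of cylinders of $B^I$ whose preimage under restriction lies in it. For an infinite cardinal $\mathfrak m$, $(E,\mathcal L)$ is $\mathfrak m$-exact if it is separated and for every $I$ with $|I|<\mathfrak m$, $i_0\notin I$, $\eta:I\to E$, and ultrafilter $\mathcal U$ on the cylinders of $B^{I\cup\{i_0\}}$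 projecting to the pullback of $\mathcal L$ by $\eta$, there is $e\in E$ with the pullback of $\mathcal L$ by $\eta\cup\{i_0\mapsto e\}$ equal to $\mathcal U$. $(E,\mathcal L)$ is regular if it is $|E|$-exact. *)

(* Defs.v *)
From Stdlib Require Import List.
Import ListNotations.

Definition infinite (T : Type) : Prop :=
  forall l : list T, exists x : T, ~ In x l.

Definition card_lt (I J : Type) : Prop :=
  (exists f : I -> J, forall x y, f x = f y -> x = y) /\
  ~ (exists g : J -> I, forall x y, g x = g y -> x = y).

(* Cylinder subsets of B^I: {psi | (psi_{e1},...,psi_{en}) in R}, R subset of B^n
   (an n-tuple is represented as a list of length n). *)
Definition cylinder {I B : Type} (C : (I -> B) -> Prop) : Prop :=
  exists (l : list I) (R : list B -> Prop), forall psi, C psi <-> R (map psi l).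

Definition cyl_ultrafilter {I B : Type} (U : ((I -> B) -> Prop) -> Prop) : Prop :=
  (forall C, U C -> cylinder C) /\
  U (fun _ => True) /\
  ~ U (fun _ => False) /\
  (forall C D, U C -> U D -> U (fun psi => C psi /\ D psi)) /\
  (forall C D, U C -> cylinder D -> (forall psi, C psi -> D psi) -> U D) /\
  (forall C, cylinder C -> U C \/ U (fun psi => ~ C psi)).

Definition local_rep (E B : Type) (L : ((E -> B) -> Prop) -> Prop) : Prop :=
  cyl_ultrafilter L.

Definition separated {E B : Type} (L : ((E -> B) -> Prop) -> Prop) : Prop :=
  forall e1 e2 : E, L (fun psi => psi e1 = psi e2) -> e1 = e2.

Definition pullback {I E B : Type} (L : ((E -> B) -> Prop) -> Prop) (eta : I -> E)
  : ((I -> B) -> Prop) -> Prop :=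
  fun C => cylinder C /\ L (fun psi => C (fun i => psi (eta i))).

(* I ∪ {i0} with i0 ∉ I is represented by option I (i0 = None).
   Projection to B^I of an ultrafilter on cylinders of B^(option I). *)
Definition projection {I B : Type} (U : ((option I -> B) -> Prop) -> Prop)
  : ((I -> B) -> Prop) -> Prop :=
  fun C => cylinder C /\ U (fun phi => C (fun i => phi (Some i))).

Definition extend {I E : Type} (eta : I -> E) (e : E) : option I -> E :=
  fun o => match o with Some i => eta i | None => e end.

(* m-exact, where the cardinal m is given as the cardinality of a type M. *)
Definition exact_card (M : Type) {E B : Type} (L : ((E -> B) -> Prop) -> Prop) : Prop :=
  separated L /\
  forall (I : Type) (eta : I -> E), card_lt I M ->
  forall U : ((option I -> B) -> Prop) -> Prop,
    cyl_ultrafilter U ->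
    (forall C, projection U C <-> pullback L eta C) ->
    exists e : E, forall C, pullback L (extend eta e) C <-> U C.

Definition regular_local_rep (E B : Type) (L : ((E -> B) -> Prop) -> Prop) : Prop :=
  local_rep E B L /\ exact_card E L.

Definition sub_index {E B : Type} (L : ((E -> B) -> Prop) -> Prop) (B' : B -> Prop) : Type :=
  { e : E | L (fun psi => B' (psi e)) }.

(* Sub-local-representation structure on E' over B':
   {psi' | (psi'_{e1..en}) in R} ∈ L'  iff  {psi | (psi_{e1..en}) in R} ∈ L,
   for e_i ∈ E', R ⊆ B'^n (R viewed inside B^n). *)
Definition sub_lrep {E B : Type} (L : ((E -> B) -> Prop) -> Prop) (B' : B -> Prop)
  : ((sub_index L B' -> {b : B | B' b}) -> Prop) -> Prop :=
  fun C => exists (l : list (sub_index L B')) (R : list {b : B | B' b} -> Prop),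
    (forall psi', C psi' <-> R (map psi' l)) /\
    L (fun psi => exists bs : list {b : B | B' b},
          map (@proj1_sig _ _) bs = map (fun e => psi (proj1_sig e)) l /\ R bs).

(* Main.v *)
Require Import Defs.
From Stdlib Require Import List ClassicalDescription FunctionalExtensionality PropExtensionality ProofIrrelevance.
Import ListNotations.

Definition toBp {B : Type} (B' : B -> Prop) (b0 : {b : B | B' b}) (x : B) : {b : B | B' b} :=
  match excluded_middle_informative (B' x) with
  | left h => exist _ x h
  | right _ => b0
  end.

Lemma toBp_val {B : Type} (B' : B -> Prop) b0 x : B' x -> proj1_sig (toBp B' b0 x) = x.
Proof. intro h. unfold toBp. destruct (excluded_middle_informative (B' x)); [reflexivity|contradiction]. Qed.

Lemma sig_eq {A : Type} (P : A -> Prop) (x y : sig P) : proj1_sig x = proj1_sig y -> x = y.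
Proof. destruct x, y; simpl; intro; subst; f_equal; apply proof_irrelevance. Qed.

Lemma toBp_proj {B : Type} (B' : B -> Prop) b0 (b : {b : B | B' b}) : toBp B' b0 (proj1_sig b) = b.
Proof. apply sig_eq. apply toBp_val. exact (proj2_sig b). Qed.

Lemma map_toBp {A B : Type} (B' : B -> Prop) b0 (f : A -> B) (l : list A) (bs : list {b : B | B' b}) :
  map (@proj1_sig _ _) bs = map f l -> map (fun a => toBp B' b0 (f a)) l = bs.
Proof.
  intro H. rewrite <- (map_map f (toBp B' b0)). rewrite <- H, map_map.
  erewrite map_ext by (intro; apply toBp_proj). apply map_id.
Qed.

Lemma cyl_comp {I J B1 B2 : Type} (h : I -> J) (g : B1 -> B2) (C : (I -> B2) -> Prop) :
  cylinder C -> cylinder (fun psi : J -> B1 => C (fun i => g (psi (h i)))).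
Proof.
  intros [l [R H]]. exists (map h l), (fun xs => R (map g xs)). intro psi.
  rewrite H, !map_map. reflexivity.
Qed.

Lemma fs_app {A : Type} (a b : list A) : firstn (length a) (a ++ b) = a /\ skipn (length a) (a ++ b) = b.
Proof. induction a; simpl; auto. destruct IHa as [H1 H2]. rewrite H1, H2. auto. Qed.

Lemma cyl_and {I B : Type} (C D : (I -> B) -> Prop) :
  cylinder C -> cylinder D -> cylinder (fun x => C x /\ D x).
Proof.
  intros [l1 [R1 H1]] [l2 [R2 H2]].
  exists (l1 ++ l2), (fun xs => R1 (firstn (length l1) xs) /\ R2 (skipn (length l1) xs)).
  intro psi. rewrite map_app. rewrite <- (length_map psi l1).
  destruct (fs_app (map psi l1) (map psi l2)) as [E1 E2]. rewrite E1, E2, H1, H2. tauto.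
Qed.

Lemma cyl_not {I B : Type} (C : (I -> B) -> Prop) :
  cylinder C -> cylinder (fun x => ~ C x).
Proof. intros [l [R H]]. exists l, (fun xs => ~ R xs). intro psi. rewrite H. tauto. Qed.

Lemma push_uf {I J B1 B2 : Type} (h : I -> J) (g : B1 -> B2) (L : ((J -> B1) -> Prop) -> Prop) :
  cyl_ultrafilter L ->
  cyl_ultrafilter (fun C : (I -> B2) -> Prop => cylinder C /\ L (fun psi => C (fun i => g (psi (h i))))).
Proof.
  intros [Hcyl [HT [HF [HI [HU HC]]]]].
  refine (conj _ (conj _ (conj _ (conj _ (conj _ _))))).
  - intros C [H _]; exact H.
  - split. exists [], (fun _ => True). intros; tauto. exact HT.
  - intros [_ H]. exact (HF H).
  - intros C D [Hc HLc] [Hd HLd]. split. apply cyl_and; auto. exact (HI _ _ HLc HLd).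
  - intros C D [Hc HLc] Hd Hsub. split; auto. apply (HU _ _ HLc).
    exact (cyl_comp h g D Hd). intros psi; apply Hsub.
  - intros C Hc. destruct (HC _ (cyl_comp h g C Hc)) as [H|H]; [left|right]; split; auto.
    apply cyl_not; auto.
Qed.

Lemma D_in {E B : Type} (L : ((E -> B) -> Prop) -> Prop) (P : B -> Prop) :
  cyl_ultrafilter L -> forall l : list E, (forall e, In e l -> L (fun psi => P (psi e))) ->
  L (fun psi => forall e, In e l -> P (psi e)).
Proof.
  intros [Hcyl [HT [HF [HI [HU HC]]]]].
  assert (Hc : forall l : list E, cylinder (fun psi : E -> B => forall e, In e l -> P (psi e))).
  { intro l. exists l, (fun xs => forall x, In x xs -> P x). intro psi. split.
    - intros H x Hx. apply in_map_iff in Hx. destruct Hx as [e [<- He]]. auto.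
    - intros H e He. apply H. apply in_map. auto. }
  induction l as [|a l IH]; intros Hl.
  - apply (HU _ _ HT (Hc [])). intros psi _ e [].
  - apply (HU _ _ (HI _ _ (Hl a (or_introl eq_refl)) (IH (fun e He => Hl e (or_intror He)))) (Hc _)).
    intros psi [H1 H2] e [<-|He]; auto.
Qed.

Lemma agree {E B : Type} (L : ((E -> B) -> Prop) -> Prop) (P : B -> Prop) :
  cyl_ultrafilter L -> forall l : list E, (forall e, In e l -> L (fun psi => P (psi e))) ->
  forall K1 K2, cylinder K2 -> L K1 ->
  (forall psi, (forall e, In e l -> P (psi e)) -> K1 psi -> K2 psi) -> L K2.
Proof.
  intros HL l Hl K1 K2 Hc HK1 Hsub.
  pose proof (D_in L P HL l Hl) as HD.
  destruct HL as [Hcyl [HT [HF [HI [HU HC]]]]].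
  apply (HU _ _ (HI _ _ HD HK1) Hc). intros psi [H1 H2]; auto.
Qed.

Lemma M_char {E B : Type} (L : ((E -> B) -> Prop) -> Prop) (B' : B -> Prop) b0 :
  cyl_ultrafilter L -> forall C, sub_lrep L B' C <->
  (cylinder C /\ L (fun psi => C (fun e => toBp B' b0 (psi (proj1_sig e))))).
Proof.
  intros HL C. split.
  - intros [l [R [HC HLs]]]. split. exists l, R; exact HC.
    destruct HL as [Hcyl [HT [HF [HI [HU HCo]]]]].
    apply (HU _ _ HLs).
    + apply (cyl_comp (@proj1_sig _ _) (toBp B' b0) C). exists l, R; exact HC.
    + intros psi [bs [Hbs HR]]. apply HC.
      enough (Hm : map (fun e : sub_index L B' => toBp B' b0 (psi (proj1_sig e))) l = bs) by (rewrite Hm; exact HR).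
      exact (map_toBp B' b0 _ l bs Hbs).
  - intros [[l [R HC]] HLc]. exists l, R. split; auto.
    apply (agree L B' HL (map (@proj1_sig _ _) l)) with (K1 := fun psi => C (fun e => toBp B' b0 (psi (proj1_sig e)))); auto.
    + intros e He. apply in_map_iff in He. destruct He as [x [<- _]]. exact (proj2_sig x).
    + exists (map (@proj1_sig _ _) l), (fun xs => exists bs : list {b : B | B' b}, map (@proj1_sig _ _) bs = xs /\ R bs).
      intro psi. rewrite map_map. tauto.
    + intros psi HD HK. exists (map (fun e => toBp B' b0 (psi (proj1_sig e))) l). split.
      * rewrite map_map. apply map_ext_in. intros a Ha. apply toBp_val. apply HD. apply in_map. auto.
      * apply HC. exact HK.
Qed.

Theorem mainTheorem8 (E B : Type) (L : ((E -> B) -> Prop) -> Prop) (B' : B -> Prop) :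
  infinite B ->
  regular_local_rep E B L ->
  infinite {b : B | B' b} ->
  regular_local_rep (sub_index L B') {b : B | B' b} (sub_lrep L B').
Proof.
  intros HinfB [HLu [Hsep Hex]] HinfBp.
  destruct (HinfBp []) as [b0 _].
  pose proof (M_char L B' b0 HLu) as Mc.
  assert (HL'eq : sub_lrep L B' = fun C => cylinder C /\ L (fun psi => C (fun e => toBp B' b0 (psi (proj1_sig e))))).
  { extensionality C. apply propositional_extensionality. apply Mc. }
  split; [|split].
  - unfold local_rep. rewrite HL'eq.
    exact (push_uf (@proj1_sig E (fun e => L (fun psi => B' (psi e)))) (toBp B' b0) L HLu).
  - intros e1 e2 H. apply Mc in H. destruct H as [_ H].
    apply sig_eq. apply Hsep.
    apply (agree L B' HLu [proj1_sig e1; proj1_sig e2]) with (K1 := fun psi => toBp B' b0 (psi (proj1_sig e1)) = toBp B' b0 (psi (proj1_sig e2))); auto.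
    + intros e [<-|[<-|[]]]. exact (proj2_sig e1). exact (proj2_sig e2).
    + exists [proj1_sig e1; proj1_sig e2], (fun xs => match xs with [a; b] => a = b | _ => False end).
      intro psi. simpl. tauto.
    + intros psi HD Heq. apply (f_equal (@proj1_sig _ _)) in Heq.
      rewrite !toBp_val in Heq; auto; apply HD; simpl; auto.
  - intros I eta Hcard U HU Hproj.
    set (eta0 := fun i => proj1_sig (eta i)).
    assert (Hcard' : card_lt I E).
    { destruct Hcard as [[f Hf] Hng]. split.
      - exists (fun i => proj1_sig (f i)). intros x y Hxy. apply Hf. apply sig_eq. exact Hxy.
      - intros [g Hg]. apply Hng. exists (fun e => g (proj1_sig e)). intros x y Hxy.
        apply sig_eq. apply Hg. exact Hxy. }
    set (V := fun C : (option I -> B) -> Prop => cylinder C /\ U (fun phi => C (fun o => proj1_sig (phi o)))).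
    assert (HV : cyl_ultrafilter V) by exact (push_uf (fun o => o) (@proj1_sig B B') U HU).
    assert (HVproj : forall C, projection V C <-> pullback L eta0 C).
    { intro C. unfold projection, pullback, V.
      set (C' := fun chi : I -> {b : B | B' b} => C (fun i => proj1_sig (chi i))).
      assert (Hc2 : forall Hc : cylinder C,
        cylinder (fun psi' : sub_index L B' -> {b : B | B' b} => C' (fun i => psi' (eta i)))).
      { intro Hc. exact (cyl_comp eta (fun x => x) C' (cyl_comp (fun i => i) (@proj1_sig _ _) C Hc)). }
      assert (Hag : cylinder C -> forall K1 K2, cylinder K2 -> L K1 ->
         (forall psi, (forall i, In i (map eta0 []) -> True) ->
            K1 psi -> K2 psi) -> True) by auto.
      clear Hag.
      assert (Hcl : forall lC (R : list B -> Prop), (forall psi, C psi <-> R (map psi lC)) ->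
        forall psi : E -> B, (forall e, In e (map eta0 lC) -> B' (psi e)) ->
        (C (fun i => proj1_sig (toBp B' b0 (psi (proj1_sig (eta i))))) <-> C (fun i => psi (eta0 i)))).
      { intros lC R HR psi HD. rewrite !HR. 
        assert (map (fun i => proj1_sig (toBp B' b0 (psi (proj1_sig (eta i))))) lC = map (fun i => psi (eta0 i)) lC) as ->; [|tauto].
        apply map_ext_in. intros a Ha. apply toBp_val. apply HD. apply (in_map eta0). auto. }
      assert (Hin : forall lC e, In e (map eta0 lC) -> L (fun psi => B' (psi e))).
      { intros lC e He. apply in_map_iff in He. destruct He as [x [<- _]]. exact (proj2_sig (eta x)). }
      split.
      - intros [Hc [Hx HUx]]. split; auto.
        assert (Hp : projection U C') by (split; [exact (cyl_comp (fun i => i) (@proj1_sig _ _) C Hc) | exact HUx]).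
        apply Hproj in Hp. destruct Hp as [_ Hp]. apply Mc in Hp. destruct Hp as [_ Hp].
        destruct Hc as [lC [R HR]].
        apply (agree L B' HLu (map eta0 lC) (Hin lC)) with (K1 := fun psi => C (fun i => proj1_sig (toBp B' b0 (psi (proj1_sig (eta i)))))); auto.
        + exact (cyl_comp eta0 (fun x => x) C (ex_intro _ lC (ex_intro _ R HR))).
        + intros psi HD HK. apply (Hcl lC R HR psi HD). exact HK.
      - intros [Hc HLc]. split; auto. split.
        + exact (cyl_comp Some (fun x => x) C Hc).
        + assert (Hp : pullback (sub_lrep L B') eta C').
          { split. exact (cyl_comp (fun i => i) (@proj1_sig _ _) C Hc).
            apply Mc. split. exact (Hc2 Hc).
            destruct Hc as [lC [R HR]].
            apply (agree L B' HLu (map eta0 lC) (Hin lC)) with (K1 := fun psi => C (fun i => psi (eta0 i))); auto.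
            - exact (cyl_comp (fun i => proj1_sig (eta i)) (fun x => proj1_sig (toBp B' b0 x)) C (ex_intro _ lC (ex_intro _ R HR))).
            - intros psi HD HK. apply (Hcl lC R HR psi HD). exact HK. }
          apply Hproj in Hp. destruct Hp as [_ Hp]. exact Hp. }
    destruct (Hex I eta0 Hcard' V HV HVproj) as [e He].
    set (Cn := fun chi : option I -> B => B' (chi None)).
    assert (HCn : cylinder Cn).
    { exists [None], (fun xs => match xs with [a] => B' a | _ => False end). intro psi. simpl. tauto. }
    assert (He' : L (fun psi => B' (psi e))).
    { assert (HVn : V Cn).
      { split; auto. destruct HU as [Hcyl [HT [HF [HI [HUu HC]]]]].
        apply (HUu _ _ HT). exact (cyl_comp (fun o => o) (@proj1_sig _ _) Cn HCn).
        intros phi _. exact (proj2_sig (phi None)). }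
      apply He in HVn. destruct HVn as [_ HVn]. exact HVn. }
    exists (exist _ e He').
    intro C. unfold pullback.
    pose proof (He (fun chi => C (fun o => toBp B' b0 (chi o)))) as Hfin.
    unfold pullback, V in Hfin.
    assert (Heq1 : (fun psi : E -> B => C (fun o => toBp B' b0 (psi (proj1_sig (extend eta (exist _ e He') o)))))
                 = (fun psi => C (fun o => toBp B' b0 (psi (extend eta0 e o))))).
    { extensionality psi. f_equal. extensionality o. destruct o; reflexivity. }
    assert (Heq2 : (fun phi : option I -> {b : B | B' b} => C (fun o => toBp B' b0 (proj1_sig (phi o)))) = C).
    { extensionality phi. f_equal. extensionality o. apply toBp_proj. }
    rewrite Heq2 in Hfin. rewrite Mc. cbv beta. rewrite Heq1.
    destruct HU as [Hcyl _].
    split.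
    + intros [Hc [_ HL1]]. apply Hfin. split; auto.
      exact (cyl_comp (fun o => o) (toBp B' b0) C Hc).
    + intro HUC. pose proof (Hcyl _ HUC) as Hc. split; auto. split.
      * exact (cyl_comp (extend eta (exist _ e He')) (fun x => x) C Hc).
      * apply Hfin. split; auto. exact (cyl_comp (fun o => o) (toBp B' b0) C Hc).
Qed.
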